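(* The axiom system $APAL_{int}$ satisfies substitution of equivalents: for all $\varphi,\psi,\chi\in\mathcal{L}_{APAL_{int}}$ and $p\in\mathit{Prop}$, if $\varphi\leftrightarrow\psi$ is a theorem of $APAL_{int}$, then $\chi[p/\varphi]\leftrightarrow\chi[p/\psi]$ is a theorem of $APAL_{int}$, where $\chi[p/\varphi]$ denotes the uniform substitution of $\varphi$ for $p$ in $\chi$.
   Context: Fix a countable set $\mathit{Prop}$ and a finite non-empty set $\mathcal{A}$ of agents. $\mathcal{L}_{APAL_{int}}$: $\varphi ::= p \mid \neg\varphi \mid \varphi\wedge\varphi \mid K_i\varphi \mid \mathrm{int}(\varphi)\mid [\varphi]\varphi\mid\Box\varphi$; $\mathcal{L}_{PAL_{int}}$ its $\Box$-free fragment; $\bot:=p\wedge\neg p$, other connectives are abbreviations. Necessity forms: $\xi(\sharp)::=\sharp\mid\varphi\to\xi(\sharp)\mid K_i\xi(\sharp)\mid\mathrm{int}(\xi(\sharp))\mid[\varphi]\xi(\sharp)$; $\xi(\varphi)$ replaces the unique $\sharp$ by $\varphi$. $APAL_{int}$: axioms: propositional tautologies; $K_i(\varphi\to\psi)\to(K_i\varphi\to K_i\psi)$; $K_i\varphi\to\varphi$; $K_i\varphi\to K_iK_i\varphi$; $\neg K_i\varphi\to K_i\neg K_i\varphi$; $\mathrm{int}(\varphi\to\psi)\to(\mathrm{int}(\varphi)\to\mathrm{int}(\psi))$; $\mathrm{int}(\varphi)\to\varphi$; $\mathrm{int}(\varphi)\to\mathrm{int}(\mathrm{int}(\varphi))$;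 $K_i\varphi\to\mathrm{int}(\varphi)$; (R1) $[\varphi]p\leftrightarrow(\mathrm{int}(\varphi)\to p)$; (R2) $[\varphi]\neg\psi\leftrightarrow(\mathrm{int}(\varphi)\to\neg[\varphi]\psi)$; (R3) $[\varphi](\psi\wedge\chi)\leftrightarrow[\varphi]\psi\wedge[\varphi]\chi$; (R4) $[\varphi]\mathrm{int}(\psi)\leftrightarrow(\mathrm{int}(\varphi)\to\mathrm{int}([\varphi]\psi))$; (R5) $[\varphi]K_i\psi\leftrightarrow(\mathrm{int}(\varphi)\to K_i[\varphi]\psi)$; (R6) $[\varphi][\psi]\chi\leftrightarrow[\neg[\varphi]\neg\mathrm{int}(\psi)]\chi$; (R7) $\Box\varphi\to[\chi]\varphi$ for $\chi\in\mathcal{L}_{PAL_{int}}$. Rules: modus ponens; from $\varphi$ infer $K_i\varphi$; from $\varphi$ infer $\mathrm{int}(\varphi)$; from $\varphi$ infer $[\psi]\varphi$; from $\xi([\psi]\chi)$ for all $\psi\in\mathcal{L}_{PAL_{int}}$ infer $\xi(\Box\chi)$. Theorems: smallest set containing the axioms and closed under the rules. *)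

(* Defs.v *)
From mathcomp Require Import all_boot.
Set Implicit Arguments. Unset Strict Implicit. Unset Printing Implicit Defensive.

Definition prop_letter := nat.

Section APALint.
Variable Ag : finType. (* the finite set of agents; non-emptiness is a hypothesis of the theorem *)

Inductive form : Type :=
| Var  : prop_letter -> form
| Neg  : form -> form
| And  : form -> form -> form
| Kn   : Ag -> form -> form
| Int  : form -> form
| Ann  : form -> form -> form
| Box  : form -> form.

Fixpoint box_free (f : form) : bool :=
  match f with
  | Var _ => true
  | Neg a => box_free a
  | And a b => box_free a && box_free b
  | Kn _ a => box_free a
  | Int a => box_free a
  | Ann a b => box_free a && box_free b
  | Box _ => false
  end.

Definition Bot : form := And (Var 0) (Neg (Var 0)).
Definition Or (a b : form) : form := Neg (And (Neg a) (Neg b)).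
Definition Imp (a b : form) : form := Neg (And a (Neg b)).
Definition Iff (a b : form) : form := And (Imp a b) (Imp b a).

(* Propositional tautologies: formulas that are true under every Boolean
   valuation of their maximal non-Boolean subformulas (atoms, K_i, int,
   announcements, Box), i.e. substitution instances of classical tautologies. *)
Fixpoint peval (v : form -> bool) (f : form) : bool :=
  match f with
  | Neg a => ~~ peval v a
  | And a b => peval v a && peval v b
  | _ => v f
  end.
Definition taut (f : form) : Prop := forall v : form -> bool, peval v f = true.

Inductive nform : Type :=
| NHole : nform
| NImp  : form -> nform -> nform
| NK    : Ag -> nform -> nform
| NInt  : nform -> nform
| NAnn  : form -> nform -> nform.

Fixpoint fill (x : nform) (f : form) : form :=
  match x with
  | NHole => f
  | NImp a x' => Imp a (fill x' f)
  | NK i x' => Kn i (fill x' f)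
  | NInt x' => Int (fill x' f)
  | NAnn a x' => Ann a (fill x' f)
  end.

Inductive thm : form -> Prop :=
| ax_taut  : forall f, taut f -> thm f
| ax_K     : forall i a b, thm (Imp (Kn i (Imp a b)) (Imp (Kn i a) (Kn i b)))
| ax_T     : forall i a, thm (Imp (Kn i a) a)
| ax_4     : forall i a, thm (Imp (Kn i a) (Kn i (Kn i a)))
| ax_5     : forall i a, thm (Imp (Neg (Kn i a)) (Kn i (Neg (Kn i a))))
| ax_intK  : forall a b, thm (Imp (Int (Imp a b)) (Imp (Int a) (Int b)))
| ax_intT  : forall a, thm (Imp (Int a) a)
| ax_int4  : forall a, thm (Imp (Int a) (Int (Int a)))
| ax_Kint  : forall i a, thm (Imp (Kn i a) (Int a))
| ax_R1    : forall a p, thm (Iff (Ann a (Var p)) (Imp (Int a) (Var p)))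
| ax_R2    : forall a b, thm (Iff (Ann a (Neg b)) (Imp (Int a) (Neg (Ann a b))))
| ax_R3    : forall a b c, thm (Iff (Ann a (And b c)) (And (Ann a b) (Ann a c)))
| ax_R4    : forall a b, thm (Iff (Ann a (Int b)) (Imp (Int a) (Int (Ann a b))))
| ax_R5    : forall i a b, thm (Iff (Ann a (Kn i b)) (Imp (Int a) (Kn i (Ann a b))))
| ax_R6    : forall a b c,
    thm (Iff (Ann a (Ann b c)) (Ann (Neg (Ann a (Neg (Int b)))) c))
| ax_R7    : forall a c, box_free c -> thm (Imp (Box a) (Ann c a))
| r_MP     : forall a b, thm (Imp a b) -> thm a -> thm b
| r_NecK   : forall i a, thm a -> thm (Kn i a)
| r_NecInt : forall a, thm a -> thm (Int a)
| r_NecAnn : forall a b, thm a -> thm (Ann b a)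
| r_Box    : forall (x : nform) c,
    (forall b, box_free b -> thm (fill x (Ann b c))) -> thm (fill x (Box c)).

Fixpoint subst (p : prop_letter) (g : form) (f : form) : form :=
  match f with
  | Var q => if q == p then g else Var q
  | Neg a => Neg (subst p g a)
  | And a b => And (subst p g a) (subst p g b)
  | Kn i a => Kn i (subst p g a)
  | Int a => Int (subst p g a)
  | Ann a b => Ann (subst p g a) (subst p g b)
  | Box a => Box (subst p g a)
  end.

End APALint.

(* Main.v *)
Require Import Defs.
From mathcomp Require Import all_boot.
Set Implicit Arguments. Unset Strict Implicit.

Ltac solve_taut :=
  let v := fresh "v" in
  intro v; unfold Iff, Imp, Or, Bot in *; simpl;
  repeat match goal with
         | |- context[peval v ?x] => destruct (peval v x)
         | |- context[v ?x] => destruct (v x)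
         end; reflexivity.

Section Proofs.
Variable Ag : finType.
Notation F := (form Ag).



Lemma tmp1 (a b : F) : taut (Imp a b) -> thm a -> thm b.
Proof. move=> T h; exact: r_MP (ax_taut T) h. Qed.
Lemma tmp2 (a1 a2 b : F) : taut (Imp a1 (Imp a2 b)) -> thm a1 -> thm a2 -> thm b.
Proof. move=> T h1 h2; exact: r_MP (r_MP (ax_taut T) h1) h2. Qed.
Lemma tmp3 (a1 a2 a3 b : F) : taut (Imp a1 (Imp a2 (Imp a3 b))) -> thm a1 -> thm a2 -> thm a3 -> thm b.
Proof. move=> T h1 h2 h3; exact: r_MP (r_MP (r_MP (ax_taut T) h1) h2) h3. Qed.
Lemma tmp4 (a1 a2 a3 a4 b : F) : taut (Imp a1 (Imp a2 (Imp a3 (Imp a4 b)))) -> thm a1 -> thm a2 -> thm a3 -> thm a4 -> thm b.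
Proof. move=> T h1 h2 h3 h4; exact: r_MP (r_MP (r_MP (r_MP (ax_taut T) h1) h2) h3) h4. Qed.
Lemma tmp5 (a1 a2 a3 a4 a5 b : F) : taut (Imp a1 (Imp a2 (Imp a3 (Imp a4 (Imp a5 b))))) -> thm a1 -> thm a2 -> thm a3 -> thm a4 -> thm a5 -> thm b.
Proof. move=> T h1 h2 h3 h4 h5; exact: r_MP (r_MP (r_MP (r_MP (r_MP (ax_taut T) h1) h2) h3) h4) h5. Qed.

Lemma tmp6 (a1 a2 a3 a4 a5 a6 b : F) : taut (Imp a1 (Imp a2 (Imp a3 (Imp a4 (Imp a5 (Imp a6 b)))))) -> thm a1 -> thm a2 -> thm a3 -> thm a4 -> thm a5 -> thm a6 -> thm b.
Proof. move=> T h1 h2 h3 h4 h5 h6; exact: r_MP (r_MP (r_MP (r_MP (r_MP (r_MP (ax_taut T) h1) h2) h3) h4) h5) h6. Qed.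

Lemma iff_refl (a : F) : thm (Iff a a).
Proof. apply: ax_taut; solve_taut. Qed.

Lemma iff_sym (a b : F) : thm (Iff a b) -> thm (Iff b a).
Proof. move=> h; refine (tmp1 _ h); solve_taut. Qed.

Lemma int_mono (a b : F) : thm (Imp a b) -> thm (Imp (Int a) (Int b)).
Proof. move=> h; exact: r_MP (ax_intK a b) (r_NecInt h). Qed.
Lemma int_iff (a b : F) : thm (Iff a b) -> thm (Iff (Int a) (Int b)).
Proof.
move=> h.
have h1 : thm (Imp a b) by refine (tmp1 _ h); solve_taut.
have h2 : thm (Imp b a) by refine (tmp1 _ h); solve_taut.
have := int_mono h1; have := int_mono h2 => g2 g1.
refine (tmp2 _ g1 g2); solve_taut.
Qed.
Lemma kn_mono i (a b : F) : thm (Imp a b) -> thm (Imp (Kn i a) (Kn i b)).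
Proof. move=> h; exact: r_MP (ax_K i a b) (r_NecK i h). Qed.
Lemma kn_iff i (a b : F) : thm (Iff a b) -> thm (Iff (Kn i a) (Kn i b)).
Proof.
move=> h.
have h1 : thm (Imp a b) by refine (tmp1 _ h); solve_taut.
have h2 : thm (Imp b a) by refine (tmp1 _ h); solve_taut.
have := kn_mono i h1; have := kn_mono i h2 => g2 g1.
refine (tmp2 _ g1 g2); solve_taut.
Qed.

Lemma noint_shift (c e : F) :
  thm (Imp (Neg (Int c)) (Neg (Int (Neg (Ann c (Neg (Int e))))))).
Proof.
have h1 := ax_intT (Neg (Ann c (Neg (Int e)))).
have h2 := ax_R2 c (Int e).
refine (tmp2 _ h1 h2); solve_taut.
Qed.

Lemma noint_ann_case (c b1 b2 : F) :
  (forall c', thm (Imp (Neg (Int c')) (Ann c' b2))) ->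
  thm (Imp (Neg (Int c)) (Ann c (Ann b1 b2))).
Proof.
move=> IH.
have h1 := ax_R6 c b1 b2.
have h2 := IH (Neg (Ann c (Neg (Int b1)))).
have h3 := noint_shift c b1.
refine (tmp3 _ h1 h2 h3); solve_taut.
Qed.

Lemma noint_ann (b c : F) : thm (Imp (Neg (Int c)) (Ann c b)).
Proof.
elim: b c => [q|b IH|b1 IH1 b2 IH2|i b IH|b IH|b1 IH1 b2 IH2|d IH] c.
- refine (tmp1 _ (ax_R1 c q)); solve_taut.
- refine (tmp1 _ (ax_R2 c b)); solve_taut.
- refine (tmp3 _ (ax_R3 c b1 b2) (IH1 c) (IH2 c)); solve_taut.
- refine (tmp1 _ (ax_R5 i c b)); solve_taut.
- refine (tmp1 _ (ax_R4 c b)); solve_taut.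
- exact: noint_ann_case.
- apply (@r_Box _ (NImp (Neg (Int c)) (NAnn c (NHole Ag))) d); move=> e _ /=.
  exact: noint_ann_case.
Qed.

Lemma ann_mono (a b c : F) : thm (Imp a b) -> thm (Imp (Ann c a) (Ann c b)).
Proof.
move=> h.
have h1 : thm (Ann c (Neg (And a (Neg b)))) := r_NecAnn c h.
have h2 := ax_R2 c (And a (Neg b)).
have h3 := ax_R3 c a (Neg b).
have h4 := ax_R2 c b.
have h5 := noint_ann b c.
refine (tmp5 _ h1 h2 h3 h4 h5); solve_taut.
Qed.

Lemma ann_iff2 (a b c : F) : thm (Iff a b) -> thm (Iff (Ann c a) (Ann c b)).
Proof.
move=> h.
have h1 : thm (Imp a b) by refine (tmp1 _ h); solve_taut.
have h2 : thm (Imp b a) by refine (tmp1 _ h); solve_taut.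
have := ann_mono c h1; have := ann_mono c h2 => g2 g1.
refine (tmp2 _ g1 g2); solve_taut.
Qed.

Definition P (d : F) := forall a b, thm (Iff a b) -> thm (Iff (Ann a d) (Ann b d)).

Lemma shift_cong (a b d1 : F) : thm (Iff a b) -> thm (Iff (Ann a d1) (Ann b d1)) ->
  thm (Iff (Neg (Ann a (Neg (Int d1)))) (Neg (Ann b (Neg (Int d1))))).
Proof.
move=> hab h.
have h1 := ax_R2 a (Int d1). have h2 := ax_R2 b (Int d1).
have h3 := ax_R4 a d1. have h4 := ax_R4 b d1.
have h5 := int_iff h. have h6 := int_iff hab.
refine (tmp6 _ h1 h2 h3 h4 h5 h6); solve_taut.
Qed.

Lemma case_var (q : prop_letter) : P (Var Ag q).
Proof. move=> a b h. refine (tmp3 _ (ax_R1 a q) (ax_R1 b q) (int_iff h)); solve_taut. Qed.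
Lemma case_neg d : P d -> P (Neg d).
Proof. move=> IH a b h. refine (tmp4 _ (ax_R2 a d) (ax_R2 b d) (int_iff h) (IH a b h)); solve_taut. Qed.
Lemma case_and d1 d2 : P d1 -> P d2 -> P (And d1 d2).
Proof. move=> I1 I2 a b h. refine (tmp4 _ (ax_R3 a d1 d2) (ax_R3 b d1 d2) (I1 a b h) (I2 a b h)); solve_taut. Qed.
Lemma case_kn (i : Ag) (d : F) : P d -> P (Kn i d).
Proof. move=> IH a b h. refine (tmp4 _ (ax_R5 i a d) (ax_R5 i b d) (int_iff h) (kn_iff i (IH a b h))); solve_taut. Qed.
Lemma case_int d : P d -> P (Int d).
Proof. move=> IH a b h. refine (tmp4 _ (ax_R4 a d) (ax_R4 b d) (int_iff h) (int_iff (IH a b h))); solve_taut. Qed.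
Lemma case_ann d1 d2 : P d1 -> P d2 -> P (Ann d1 d2).
Proof.
move=> I1 I2 a b h.
have h3 := I2 _ _ (shift_cong h (I1 a b h)).
refine (tmp3 _ (ax_R6 a d1 d2) (ax_R6 b d1 d2) h3); solve_taut.
Qed.

Lemma box_dir (a b d : F) : P d -> (forall e, box_free e -> P e) -> thm (Iff a b) ->
  thm (Imp (Ann a (Box d)) (Ann b (Box d))).
Proof.
move=> IH Hbf h.
apply (@r_Box _ (NImp (Ann a (Box d)) (NAnn b (NHole Ag))) d); move=> e He /=.
have h1 := ann_mono a (ax_R7 d He).
have h2 := ax_R6 a e d. have h3 := ax_R6 b e d.
have h4 := IH _ _ (shift_cong h (Hbf e He a b h)).
refine (tmp4 _ h1 h2 h3 h4); solve_taut.
Qed.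

Lemma case_box d : P d -> (forall e, box_free e -> P e) -> P (Box d).
Proof.
move=> IH Hbf a b h.
have g1 := box_dir IH Hbf h.
have g2 := box_dir IH Hbf (iff_sym h).
refine (tmp2 _ g1 g2); solve_taut.
Qed.

Lemma P_bf d : box_free d -> P d.
Proof.
elim: d => [q|d IH|d1 I1 d2 I2|i d IH|d IH|d1 I1 d2 I2|d IH] /=.
- move=> _; exact: case_var.
- move=> H; exact: case_neg (IH H).
- move=> /andP[H1 H2]; exact: case_and (I1 H1) (I2 H2).
- move=> H; exact: case_kn (IH H).
- move=> H; exact: case_int (IH H).
- move=> /andP[H1 H2]; exact: case_ann (I1 H1) (I2 H2).
- by [].
Qed.

Lemma P_all d : P d.
Proof.
elim: d => [q|d IH|d1 I1 d2 I2|i d IH|d IH|d1 I1 d2 I2|d IH].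
- exact: case_var.
- exact: case_neg.
- exact: case_and.
- exact: case_kn.
- exact: case_int.
- exact: case_ann.
- exact: case_box IH P_bf.
Qed.

Lemma box_cong (a b : F) : thm (Iff a b) -> thm (Iff (Box a) (Box b)).
Proof.
have dir : forall a b : F, thm (Iff a b) -> thm (Imp (Box a) (Box b)).
  move=> x y h.
  have hi : thm (Imp x y) by refine (tmp1 _ h); solve_taut.
  apply (@r_Box _ (NImp (Box x) (NHole Ag)) y); move=> e He /=.
  refine (tmp2 _ (ax_R7 x He) (ann_mono e hi)); solve_taut.
move=> h; refine (tmp2 _ (dir _ _ h) (dir _ _ (iff_sym h))); solve_taut.
Qed.

End Proofs.

Theorem mainTheorem12 (Ag : finType) (HAg : 0 < #|Ag|)
  (phi psi chi : form Ag) (p : prop_letter) :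
  thm (Iff phi psi) -> thm (Iff (subst p phi chi) (subst p psi chi)).
Proof.
move=> h.
elim: chi => [q|d IH|d1 I1 d2 I2|i d IH|d IH|d1 I1 d2 I2|d IH] /=.
- case: eqP => _; [exact: h | exact: iff_refl].
- refine (tmp1 _ IH); solve_taut.
- refine (tmp2 _ I1 I2); solve_taut.
- exact: kn_iff.
- exact: int_iff.
- have g1 := P_all (subst p phi d2) I1.
  have g2 := ann_iff2 (subst p psi d1) I2.
  refine (tmp2 _ g1 g2); solve_taut.
- exact: box_cong.
Qed.
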